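(* Let $k\ge 2$, positive integers $n_1,\dots,n_k$, and functions $f_{ij}:\mathbb{R}^{n_j}\to\mathbb{R}^{n_i}$ ($1\le j<i\le k$) be given, and let $\chi_i^*$ ($i=1,\dots,k-1$) be defined by $$\chi_i^*(\nu_{i:k})=\sup_{z_i\in\mathbb{R}^{n_i}}\Big(\nu_i^T z_i+\sum_{j=i+1}^{k}\nu_j^T f_{ji}(z_i)\Big).$$ Let $\|\cdot\|$ be a norm on $\mathbb{R}^{n_1}$ with dual norm $\|\cdot\|_*$, let $x\in\mathbb{R}^{n_1}$, $\epsilon>0$, $\mathcal B(x)=\{x+\Delta:\|\Delta\|\le\epsilon\}$, and $c\in\mathbb{R}^{n_k}$. Suppose that for each $i=1,\dots,k-1$ we are given functions $g_{ij}:\mathbb{R}^{n_j}\to\mathbb{R}^{n_i}$ for $j=i+1,\dots,k$ and a function $h_i:\mathbb{R}^{n_i}\times\cdots\times\mathbb{R}^{n_k}\to\mathbb{R}$ such that for every $\nu_{i+1:k}$, setting $\nu_i=\sum_{j=i+1}^k g_{ij}(\nu_j)$, we have $$\chi_i^*(-\nu_i,\nu_{i+1:k})\le h_i(\nu_{i:k}).$$ Define $\nu_{1:k}$ (the ''dual network'' applied to $c$) by $\nu_k=-c$ and $\nu_i=\sum_{j=i+1}^{k} g_{ij}(\nu_j)$ for $i=k-1,\dots,1$, and let $$J(x,\nu_{1:k})=-\nu_1^T x-\epsilon\|\nu_1\|_*-\sum_{i=1}^{k-1}h_i(\nu_{i:k}).$$ Then $J(x,\nu_{1:k})$ is a lower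 bound on the value of the problem $$\min\; c^T z_k\quad\text{subject to}\quad z_i=\sum_{j=1}^{i-1}f_{ij}(z_j)\ (i=2,\dots,k),\quad z_1\in\mathcal B(x);$$ that is, $c^T z_k\ge J(x,\nu_{1:k})$ for every feasible $z_{1:k}$.
   Context: Notation: $(\cdot)_{a:b}$ denotes the tuple $((\cdot)_a,\dots,(\cdot)_b)$. The constraints $z_i=\sum_{j<i}f_{ij}(z_j)$ describe a generalized $k$-layer network with arbitrary skip connections and output $z_k$; in the adversarial application $c=e_{y^\star}-e_{y^{\mathrm{targ}}}$ for a true label $y^\star$ and a target label $y^{\mathrm{targ}}$. The dual norm is $\|v\|_*=\sup_{\|\Delta\|\le 1}v^T\Delta$. *)

(* Defs.v *)
From mathcomp Require Import ssreflect ssrbool ssrfun eqtype ssrnat seq fintype bigop.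
From Stdlib Require Import Reals.
Set Implicit Arguments. Unset Strict Implicit.

Open Scope R_scope.

Definition vec (m : nat) := 'I_m -> R.

Definition vzero (m : nat) : vec m := fun _ => 0.
Definition vadd (m : nat) (u v : vec m) : vec m := fun t => u t + v t.
Definition vopp (m : nat) (u : vec m) : vec m := fun t => - u t.
Definition vsub (m : nat) (u v : vec m) : vec m := fun t => u t - v t.
Definition vscale (m : nat) (a : R) (u : vec m) : vec m := fun t => a * u t.

Definition dot (m : nat) (u v : vec m) : R := \big[Rplus/0]_(t < m%nat) (u t * v t).

Definition is_norm (m : nat) (N : vec m -> R) : Prop :=
  (forall v, 0 <= N v) /\
  (forall v, N v = 0 -> v = @vzero m) /\
  (forall a v, N (vscale a v) = Rabs a * N v) /\
  (forall u v, N (vadd u v) <= N u + N v).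

Definition is_dual_norm (m : nat) (N dn : vec m -> R) : Prop :=
  forall v, is_lub (fun y => exists d, N d <= 1 /\ y = dot v d) (dn v).

Definition vsum (m a b : nat) (F : nat -> vec m) : vec m :=
  \big[@vadd m/@vzero m]_(a <= j < b) F j.

Definition rsum (a b : nat) (F : nat -> R) : R :=
  \big[Rplus/0]_(a <= j < b) F j.

(* The set whose supremum is chi_i^*(mu_i, nu_{i+1:k}):
   { mu^T z + sum_{j=i+1}^k nu_j^T f_{ji}(z) : z in R^{n_i} } *)
Definition chi_set (n : nat -> nat) (k i : nat)
  (f : forall a b : nat, vec (n b) -> vec (n a))
  (mu : vec (n i)) (nu : forall j : nat, vec (n j)) : R -> Prop :=
  fun y => exists z : vec (n i),
    y = dot mu z + rsum i.+1 k.+1 (fun j => dot (nu j) (f j i z)).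

(* chi_i^*(mu, nu_{i+1:k}) <= h, i.e. the supremum (in the extended reals) of
   chi_set is at most h, i.e. h is an upper bound of chi_set. *)
Definition chi_star_le (n : nat -> nat) (k i : nat)
  (f : forall a b : nat, vec (n b) -> vec (n a))
  (mu : vec (n i)) (nu : forall j : nat, vec (n j)) (h : R) : Prop :=
  forall y, chi_set k f mu nu y -> y <= h.

(* Main.v *)
Require Import Defs.
From HB Require Import structures.
From mathcomp Require Import ssreflect ssrbool ssrfun eqtype ssrnat seq fintype bigop.
From Stdlib Require Import Reals Lra.
Open Scope R_scope.

Lemma RplusA : associative Rplus. Proof. move=> *; ring. Qed.
Lemma RplusC : commutative Rplus. Proof. move=> *; ring. Qed.
Lemma Rplus0 : left_id 0 Rplus. Proof. move=> *; ring. Qed.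
HB.instance Definition _ := Monoid.isComLaw.Build R 0 Rplus RplusA RplusC Rplus0.

Lemma sum_opp m (F : 'I_m -> R) :
  \big[Rplus/0]_(t < m) (- F t) = - \big[Rplus/0]_(t < m) F t.
Proof.
symmetry; apply: (big_morph Ropp (id1:=0) (op1:=Rplus) (id2:=0) (op2:=Rplus)) => [x y|]; lra.
Qed.

Lemma dot_vadd m (u v w : vec m) : dot u (vadd v w) = dot u v + dot u w.
Proof.
rewrite /dot /vadd -big_split /=; apply: eq_bigr => t _; ring.
Qed.

Lemma dot_vzero m (u : vec m) : dot u (@vzero m) = 0.
Proof. rewrite /dot /vzero big1 // => t _; ring. Qed.

Lemma dot_vopp m (u v : vec m) : dot (vopp u) v = - dot u v.
Proof.
rewrite /dot /vopp -sum_opp; apply: eq_bigr => t _; ring.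
Qed.

Lemma dot_vsub m (u v w : vec m) : dot u (vsub v w) = dot u v - dot u w.
Proof.
rewrite /dot /vsub /Rminus -sum_opp -big_split /=; apply: eq_bigr => t _; ring.
Qed.

Lemma dot_vscale m (u v : vec m) a : dot u (vscale a v) = a * dot u v.
Proof.
rewrite /dot /vscale (big_morph (fun y => a * y) (id1:=0) (op1:=Rplus) (id2:=0) (op2:=Rplus)).
- apply: eq_bigr => t _; ring.
- move=> x y; ring.
- ring.
Qed.

Lemma dot_vsum m (u : vec m) a b F :
  dot u (vsum a b F) = rsum a b (fun j => dot u (F j)).
Proof.
rewrite /vsum /rsum.
apply: (big_morph (dot u) (id1:=0) (op1:=Rplus) (id2:=@vzero m) (op2:=@vadd m)).
- move=> x y; exact: dot_vadd.
- exact: dot_vzero.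
Qed.

Lemma rsum_le a b (F G : nat -> R) :
  (forall i, (a <= i < b)%nat -> F i <= G i) -> rsum a b F <= rsum a b G.
Proof.
move=> H; rewrite /rsum big_seq_cond [X in _ <= X]big_seq_cond.
apply: (big_ind2 (fun x y => x <= y)) => [|x1 x2 y1 y2 h1 h2|i /andP[Hi _]]; try lra.
apply: H; by rewrite -mem_index_iota.
Qed.

Lemma tri (F : nat -> nat -> R) K : (1 <= K)%nat ->
  rsum 1 K (fun i => rsum i.+1 K.+1 (F i)) =
  rsum 2 K.+1 (fun j => rsum 1 j (fun i => F i j)).
Proof.
elim: K => [//|K IH] HK.
case: K IH HK => [|K] IH HK.
  by rewrite /rsum !big_geq.
have IH' := IH isT.
rewrite /rsum in IH' *.
rewrite big_nat_recr //= big_nat1.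
rewrite [in RHS]big_nat_recr //= [X in _ = _ + X]big_nat_recr //=.
rewrite -IH'.
rewrite (eq_big_nat _ _ (F2 := fun i => \big[Rplus/0]_(i.+1 <= j < K.+2) F i j + F i K.+2)); last first.
  move=> i /andP[_ Hi]; rewrite big_nat_recr //; exact: ltnW.
rewrite big_split /=; ring.
Qed.

Theorem theorem1
  (k : nat) (hk : (2 <= k)%nat)
  (n : nat -> nat) (hn : forall i, (1 <= i)%nat -> (i <= k)%nat -> (0 < n i)%nat)
  (f : forall i j : nat, vec (n j) -> vec (n i))
  (N : vec (n 1%nat) -> R) (hN : is_norm N)
  (dn : vec (n 1%nat) -> R) (hdn : is_dual_norm N dn)
  (x : vec (n 1%nat)) (eps : R) (heps : 0 < eps)
  (c : vec (n k))
  (g : forall i j : nat, vec (n j) -> vec (n i))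
  (h : forall i : nat, (forall j : nat, vec (n j)) -> R)
  (hh : forall i, (1 <= i)%nat -> (i <= k - 1)%nat ->
        forall nu : forall j : nat, vec (n j),
          nu i = vsum i.+1 k.+1 (fun j => g i j (nu j)) ->
          chi_star_le k f (vopp (nu i)) nu (h i nu))
  (nu : forall j : nat, vec (n j))
  (hnuk : nu k = vopp c)
  (hnui : forall i, (1 <= i)%nat -> (i <= k - 1)%nat ->
          nu i = vsum i.+1 k.+1 (fun j => g i j (nu j)))
  (z : forall i : nat, vec (n i))
  (hz1 : N (vsub (z 1%nat) x) <= eps)
  (hz : forall i, (2 <= i)%nat -> (i <= k)%nat ->
        z i = vsum 1 i (fun j => f i j (z j))) :
  dot c (z k) >=
    - dot (nu 1%nat) x - eps * dn (nu 1%nat) - rsum 1 k (fun i => h i nu).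
Proof.
set a := fun j => dot (nu j) (z j).
have S1 : rsum 1 k (fun i => dot (vopp (nu i)) (z i) +
            rsum i.+1 k.+1 (fun j => dot (nu j) (f j i (z i))))
          <= rsum 1 k (fun i => h i nu).
  apply: rsum_le => i /andP[H1 H2].
  have Hle : (i <= k - 1)%nat.
    by move: H2; case: (k) => //= k'; rewrite subSS subn0.
  apply: (hh i H1 Hle nu (hnui i H1 Hle)).
  by exists (z i).
have S2 : rsum 1 k (fun i => dot (vopp (nu i)) (z i) +
            rsum i.+1 k.+1 (fun j => dot (nu j) (f j i (z i))))
          = - rsum 1 k a + rsum 2 k.+1 a.
  rewrite /rsum big_split /=.
  rewrite (eq_bigr (fun i => - a i)); last by move=> i _; rewrite dot_vopp.
  rewrite (big_morph Ropp (id1:=0) (op1:=Rplus) (id2:=0) (op2:=Rplus)); [|move=> *; lra|lra].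
  congr Rplus.
  have := tri (fun i j => dot (nu j) (f j i (z i))) k (ltnW hk); rewrite /rsum => ->.
  apply: eq_big_nat => j /andP[Hj1 Hj2].
  by rewrite /a (hz j Hj1 Hj2) dot_vsum.
have S3 : - rsum 1 k a + rsum 2 k.+1 a = a k - a 1%nat.
  rewrite /rsum big_nat_recr //= (@big_ltn _ _ _ 1 k) //.
  ring.
have Ak : a k = - dot c (z k).
  by rewrite /a hnuk dot_vopp.
have D : dot (nu 1%nat) (vsub (z 1%nat) x) <= eps * dn (nu 1%nat).
  have [Hub _] := hdn (nu 1%nat).
  have Hd := Hub (dot (nu 1%nat) (vscale (/ eps) (vsub (z 1%nat) x))).
  have Hle : / eps * dot (nu 1%nat) (vsub (z 1%nat) x) <= dn (nu 1%nat).
    rewrite -dot_vscale.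
    apply: Hd; exists (vscale (/ eps) (vsub (z 1%nat) x)); split; last by [].
    case: hN => _ [_ [Hs _]]; rewrite Hs Rabs_right; last first.
      by apply: Rle_ge; apply: Rlt_le; apply: Rinv_0_lt_compat.
    apply: (Rmult_le_reg_l eps) => //.
    rewrite -Rmult_assoc Rinv_r; lra.
  apply: (Rmult_le_reg_l (/ eps)); first exact: Rinv_0_lt_compat.
  rewrite -Rmult_assoc Rinv_l; lra.
rewrite dot_vsub in D.
rewrite S2 S3 Ak /a in S1.
lra.
Qed.
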